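(* There exist absolute constants $C>0$, $c>0$ and $m_0$ such that for all positive integers $n,m$ with $m\le \frac{\sqrt{n}}{2}$, \[\operatorname{scp}(K_n-K_m)\ \ge\ (2m-1)n-Cm^2,\] and if moreover $m\ge m_0$, \[\operatorname{scp}(K_n-K_m)\ \le\ (2m-1)n-cm^2.\] (That is, $(2m-1)n-O(m^2)\le \operatorname{scp}(K_n-K_m)\le (2m-1)n-\Omega(m^2)$ for $m\le\sqrt n/2$.)
   Context: $K_n-K_m$ denotes the graph obtained from $K_n$ by deleting all edges among a fixed set of $m$ of its vertices. A clique partition of a graph $G$ is a family of cliques of $G$ such that every edge has both endpoints in exactly one member; $\operatorname{scp}(G)$ is the minimum of the sum of the sizes of the cliques over all clique partitions of $G$. *)

(* Defs.v *)
From mathcomp Require Import all_boot all_order all_algebra.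
Set Implicit Arguments. Unset Strict Implicit. Unset Printing Implicit Defensive.

(* The graph K_n - K_m on vertex set 'I_n: the m deleted-clique vertices are
   0, ..., m-1; two distinct vertices are adjacent unless both are < m. *)
Definition KnKm_adj (n m : nat) (x y : 'I_n) : bool :=
  (x != y) && ~~ ((x < m) && (y < m)).

Definition is_clique (n m : nat) (A : {set 'I_n}) : bool :=
  [forall x in A, forall y in A, (x != y) ==> KnKm_adj m x y].

Definition is_clique_partition (n m : nat) (P : {set {set 'I_n}}) : bool :=
  [forall A in P, is_clique m A] &&
  [forall x, forall y, KnKm_adj m x y ==>
     (#|[set A in P | (x \in A) && (y \in A)]| == 1)].

Definition cp_weight (n : nat) (P : {set {set 'I_n}}) : nat :=
  \sum_(A in P) #|A|.

Definition edge_partition (n m : nat) : {set {set 'I_n}} :=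
  [set A : {set 'I_n} | (#|A| == 2) && is_clique m A].

Lemma edge_partition_cp (n m : nat) : is_clique_partition m (edge_partition n m).
Proof.
apply/andP; split.
  by apply/forall_inP => A; rewrite inE => /andP[].
apply/forallP => x; apply/forallP => y; apply/implyP => adj.
have nxy : x != y by case/andP: adj.
apply/cards1P; exists [set x; y]; apply/setP => A.
rewrite !inE; apply/idP/idP.
  case/andP=> /andP[/eqP cA _] /andP[xA yA].
  rewrite eq_sym eqEcard cA cards2 nxy leqnn andbT.
  by apply/subsetP => z; rewrite !inE => /orP[]/eqP->.
move/eqP->; rewrite !inE !eqxx orbT /= andbT cards2 nxy /=.
apply/forall_inP => u; rewrite !inE => /orP[]/eqP->;
apply/forall_inP => v; rewrite !inE => /orP[]/eqP->; apply/implyP => //;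
move=> H; first [by rewrite eqxx in H | move: adj; rewrite /KnKm_adj H /=; by rewrite [(y < m) && _]andbC => /andP[]].
Qed.

Lemma exists_clique_partition (n m : nat) :
  exists k, [exists P : {set {set 'I_n}}, is_clique_partition m P && (cp_weight P == k)].
Proof.
exists (cp_weight (edge_partition n m)); apply/existsP; exists (edge_partition n m).
by rewrite edge_partition_cp eqxx.
Qed.

Definition scp (n m : nat) : nat := ex_minn (exists_clique_partition n m).

(* Main.v *)
Require Import Defs.
From mathcomp Require Import all_boot all_order all_algebra.
From mathcomp Require Import zify ring lra.
Set Implicit Arguments. Unset Strict Implicit. Unset Printing Implicit Defensive.

Lemma card_lt n k : k <= n -> #|[set x : 'I_n | x < k]| = k.
Proof.
move=> kn.
have -> : [set x : 'I_n | x < k] = [set widen_ord kn y | y in 'I_k].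
  apply/setP => x; rewrite inE; apply/idP/imsetP.
    move=> xk; exists (Ordinal xk) => //; exact: val_inj.
  by case=> y _ ->; rewrite /= ltn_ord.
rewrite card_imset ?card_ord // => a b /(congr1 val) /=; exact: val_inj.
Qed.

Lemma adj_sym n m (x y : 'I_n) : KnKm_adj m x y = KnKm_adj m y x.
Proof. by rewrite /KnKm_adj eq_sym; congr (_ && ~~ _); apply: andbC. Qed.

Definition deg n (P : {set {set 'I_n}}) (v : 'I_n) := \sum_(A in P | v \in A) 1.

Lemma weight_deg n (P : {set {set 'I_n}}) : cp_weight P = \sum_v deg P v.
Proof.
rewrite /cp_weight /deg.
under eq_bigr => A _ do rewrite -sum1_card.
by rewrite (exchange_big_dep predT) //=.
Qed.

Section Part.
Variables (n m : nat) (P : {set {set 'I_n}}).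
Hypothesis cpP : is_clique_partition m P.

Lemma cp_clique A : A \in P -> is_clique m A.
Proof. by case/andP: cpP => /forall_inP H _; apply: H. Qed.

Lemma cp_one (x y : 'I_n) : KnKm_adj m x y -> #|[set A in P | (x \in A) && (y \in A)]| = 1.
Proof. by case/andP: cpP => _ /forallP/(_ x)/forallP/(_ y)/implyP H /H/eqP. Qed.

Lemma clique_adj (A : {set 'I_n}) (x y : 'I_n) : is_clique m A -> x \in A -> y \in A -> x != y -> KnKm_adj m x y.
Proof. by move=> /forall_inP/(_ x) H xA yA; move: (H xA) => /forall_inP/(_ y yA)/implyP. Qed.

Lemma cp_uniq (A B : {set 'I_n}) (x y : 'I_n) : A \in P -> B \in P -> x \in A -> y \in A -> x \in B -> y \in B ->
  x != y -> A = B.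
Proof.
move=> AP BP xA yA xB yB nxy.
have adj : KnKm_adj m x y by apply: (clique_adj (cp_clique AP)).
have := cp_one adj; move/eqP/cards1P=> [C HC].
have : A \in [set C] by rewrite -HC !inE AP xA yA.
have : B \in [set C] by rewrite -HC !inE BP xB yB.
by rewrite !inE => /eqP-> /eqP->.
Qed.

Lemma L1 (v : 'I_n) (S : {set 'I_n}) : (forall x, x \in S -> KnKm_adj m v x) ->
  #|S| <= \sum_(A in P | v \in A) #|A :&: S|.
Proof.
move=> adjS.
rewrite -sum1_card.
have -> : \sum_(A in P | v \in A) #|A :&: S| = \sum_(A in P | v \in A) \sum_(x in S) (x \in A : nat).
  apply: eq_bigr => A _; rewrite -sum1_card big_mkcond /= [RHS]big_mkcond /=.
  by apply: eq_bigr => x _; rewrite inE; case: (x \in A); case: (x \in S).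
rewrite (exchange_big_dep (mem S)) //=.
apply: leq_sum => x xS.
have := cp_one (adjS x xS); move/eqP/cards1P=> [A0 HA0].
have : A0 \in [set A0] by rewrite inE.
rewrite -HA0 !inE => /andP[A0P /andP[vA0 xA0]].
by rewrite (bigD1 A0) ?A0P ?vA0 ?xS //= xA0.
Qed.

Lemma L1k (v : 'I_n) (S : {set 'I_n}) k : (forall x, x \in S -> KnKm_adj m v x) ->
  (forall A, A \in P -> v \in A -> #|A :&: S| <= k) ->
  #|S| <= deg P v * k.
Proof.
move=> adjS Hk; apply: leq_trans (L1 adjS) _.
rewrite /deg big_distrl /=; apply: leq_sum => A /andP[AP vA].
by rewrite mul1n; apply: Hk.
Qed.

End Part.

Lemma lower n m (P : {set {set 'I_n}}) : is_clique_partition m P ->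
  0 < m -> 4 * m * m <= n -> (2 * m - 1) * (n - m) <= cp_weight P.
Proof.
move=> cpP m0 mn.
pose I := [set x : 'I_n | x < m]; pose W := ~: I.
have cI : #|I| = m by apply: card_lt; nia.
have cW : #|W| = n - m by move: (cardsC I); rewrite cI card_ord /W; lia.
have inW x : (x \in W) = (m <= x) by rewrite !inE -leqNgt.
have inI x : (x \in I) = (x < m) by rewrite !inE.
have lt0 : m < n by nia.
have lt1 : m.+1 < n by nia.
pose w0 := Ordinal lt0; pose w1 := Ordinal lt1.
have adj01 : KnKm_adj m w0 w1.
  apply/andP; split; first by apply/eqP => /(congr1 val) /=; lia.
  by rewrite /= ltnn.
have := cp_one cpP adj01; move/eqP/cards1P=> [Z0 HZ0].
have : Z0 \in [set Z0] by rewrite inE.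
rewrite -HZ0 inE => /andP[Z0P _].
case: (@arg_maxnP _ Z0 (mem P) (fun A => #|A :&: W|) Z0P) => Z ZP Zmax.
set z := #|Z :&: W|.
have degW x : x \in W -> m <= deg P x.
  move=> xW; rewrite -cI -[deg P x]muln1; apply: (L1k cpP).
    move=> y; rewrite inI => ym; rewrite /KnKm_adj; move: xW; rewrite inW => xm.
    rewrite (leqNgt m x) in xm; rewrite (negbTE xm) andFb andbT.
    by apply/eqP => /(congr1 val) /= e; move: xm; rewrite e ym.
  move=> A AP xA; apply/card_le1_eqP => y y' /setIP[yA yI] /setIP[y'A y'I].
  apply/eqP; apply: contraT => nyy; rewrite eq_sym in nyy.
  have := clique_adj (cp_clique cpP AP) yA y'A nyy.
  by rewrite /KnKm_adj -!inI yI y'I nyy.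
have Zl v (S : {set 'I_n}) : v \notin Z -> S \subset Z -> (forall x, x \in S -> KnKm_adj m v x) ->
    #|S| <= deg P v.
  move=> vZ SZ adjS; rewrite -[deg P v]muln1; apply: (L1k cpP) => // A AP vA.
  apply/card_le1_eqP => y y' /setIP[yA yS] /setIP[y'A y'S].
  apply/eqP; apply: contraT => nyy; rewrite eq_sym in nyy.
  have AZ := cp_uniq cpP AP ZP yA y'A (subsetP SZ _ yS) (subsetP SZ _ y'S) nyy.
  by move: vZ; rewrite -AZ vA.
have degIZ u : u \in I :\: Z -> z <= deg P u.
  case/setDP => uI uZ; apply: Zl => //; first exact: subsetIl.
  move=> x /setIP[_ xW]; rewrite /KnKm_adj; move: uI xW; rewrite inI inW => um xm.
  rewrite (leqNgt m x) in xm; rewrite (negbTE xm) andbF andbT.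
  by apply/eqP => /(congr1 val) /= e; move: xm; rewrite -e um.
have degWZ w : w \in W :\: Z -> z <= deg P w.
  case/setDP => wW wZ; apply: Zl => //; first exact: subsetIl.
  move=> x /setIP[xZ xW]; rewrite /KnKm_adj; move: wW xW; rewrite !inW => wm xm.
  rewrite (leqNgt m x) in xm; rewrite (negbTE xm) andbF andbT.
  by apply/eqP => e; move: wZ; rewrite e xZ.
have cIZ : #|I :&: Z| <= 1.
  apply/card_le1_eqP => y y' /setIP[yI yZ] /setIP[y'I y'Z].
  apply/eqP; apply: contraT => nyy; rewrite eq_sym in nyy.
  have := clique_adj (cp_clique cpP ZP) yZ y'Z nyy.
  by rewrite /KnKm_adj -!inI yI y'I nyy.
have cIdZ : m - 1 <= #|I :\: Z| by rewrite cardsD cI; lia.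
have zW : z <= n - m by rewrite -cW /z setIC; apply: subset_leq_card; apply: subsetIl.
have cWZ : #|W :&: Z| = z by rewrite /z setIC.
have cWdZ : #|W :\: Z| = n - m - z by rewrite cardsD cWZ cW.
have small w : w \in W -> n - m - 1 <= deg P w * (z - 1).
  move=> wW; have -> : n - m - 1 = #|W :\ w| by move: (cardsD1 w W); rewrite wW cW; lia.
  apply: (L1k cpP).
    move=> x /setD1P[xw xW]; rewrite /KnKm_adj; move: wW xW; rewrite !inW => wm xm.
    rewrite (leqNgt m x) in xm; rewrite (negbTE xm) andbF andbT eq_sym //.
  move=> A AP wA; rewrite setIDA.
  have := cardsD1 w (A :&: W); rewrite inE wA wW /=.
  have := Zmax A AP; rewrite /= -/z => h1 h2; move: h1; rewrite h2 => h; apply: leq_trans (leq_sub2r 1 h); by rewrite addKn; apply: leqnn.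
have split1 : cp_weight P = \sum_(v in I) deg P v + \sum_(v in W) deg P v.
  rewrite weight_deg (bigID (mem I)) /=; congr (_ + _).
  by apply: eq_bigl => v; rewrite !inE.
have sI : #|I :\: Z| * z <= \sum_(v in I) deg P v.
  rewrite (@big_setID _ _ _ _ I Z) /= -sum_nat_const; apply: leq_trans (leq_addl _ _).
  exact: leq_sum.
rewrite split1.
case: (leqP (2 * m - 1) z) => hz.
  have sW : z * m + (n - m - z) * z <= \sum_(v in W) deg P v.
    rewrite (@big_setID _ _ _ _ W Z) /=; apply: leq_add.
      rewrite -{1}cWZ -sum_nat_const.
      by apply: leq_sum => v /setIP[vW _]; apply: degW.
    rewrite -cWdZ -sum_nat_const; exact: leq_sum.
  have : (m - 1) * z <= #|I :\: Z| * z by apply: leq_mul.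
  move: sI sW hz zW; set a := \sum_(v in I) _; set b := \sum_(v in W) _.
  nia.
have sW : (n - m) * (2 * m - 1) <= \sum_(v in W) deg P v.
  rewrite -cW -sum_nat_const; apply: leq_sum => v vW.
  have := small v vW; nia.
lia.
Qed.

Lemma two_eq n (A : {set 'I_n}) x y : #|A| == 2 -> x \in A -> y \in A -> x != y -> A = [set x; y].
Proof.
move=> /eqP cA xA yA nxy; apply/eqP; rewrite eq_sym eqEcard cards2 nxy cA leqnn andbT.
by apply/subsetP => z; rewrite !inE => /orP[]/eqP->.
Qed.

Lemma card1_of (T : finType) (Q : {set T}) a : a \in Q -> (forall b, b \in Q -> b = a) -> #|Q| == 1.
Proof.
move=> aQ H; apply/cards1P; exists a; apply/setP => b; rewrite inE.
by apply/idP/eqP => [/H|->].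
Qed.

Lemma pair_clique n m (x y : 'I_n) : KnKm_adj m x y -> is_clique m [set x; y].
Proof.
move=> adj; apply/forall_inP => u; rewrite !inE => /orP[]/eqP->;
apply/forall_inP => v; rewrite !inE => /orP[]/eqP->; rewrite ?eqxx //=;
apply/implyP => _; by rewrite // adj_sym.
Qed.

Lemma upper n m : 0 < m -> m < n ->
  exists P : {set {set 'I_n}}, is_clique_partition m P &&
    (cp_weight P <= 1 + (n - m) + (m - 1) * (n - m) * 2).
Proof.
move=> m0 mn.
pose I := [set x : 'I_n | x < m]; pose W := ~: I.
pose J := [set x : 'I_n | x < 1].
pose S0 := J :|: W.
have inS0 x : (x \in S0) = (x < 1) || (m <= x) by rewrite !inE -leqNgt.
pose E2 := [set A : {set 'I_n} | (#|A| == 2) && is_clique m A && ~~ (A \subset S0)].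
have inE2 A : (A \in E2) = [&& #|A| == 2, is_clique m A & ~~ (A \subset S0)] by rewrite inE andbA.
exists (S0 |: E2).
have S0c : is_clique m S0.
  apply/forall_inP => x xS; apply/forall_inP => y yS; apply/implyP => nxy.
  rewrite /KnKm_adj nxy /=; apply/negP => /andP[xm ym].
  move: xS yS; rewrite !inS0 => xS yS.
  have x0 : x < 1 by case/orP: xS => // h; move: xm; rewrite ltnNge h.
  have y0 : y < 1 by case/orP: yS => // h; move: ym; rewrite ltnNge h.
  by move/eqP: nxy; apply; apply: val_inj => /=; move: x0 y0; rewrite !ltnS !leqn0 => /eqP -> /eqP ->.
have S0E2 : S0 \notin E2 by rewrite inE2 subxx /= !andbF.
apply/andP; split.
  apply/andP; split.
    apply/forall_inP => A; rewrite in_setU1 => /orP[/eqP->//|].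
    by rewrite inE2 => /and3P[].
  apply/forallP => x; apply/forallP => y; apply/implyP => adj.
  have nxy : x != y by case/andP: adj.
  have inP2 A : A \in E2 -> x \in A -> y \in A -> A = [set x; y].
    by rewrite inE2 => /and3P[cA _ _] xA yA; apply: two_eq.
  case: (boolP ((x \in S0) && (y \in S0))) => [/andP[xS yS]|nS].
    apply: (@card1_of _ _ S0); first by rewrite inE in_setU1 eqxx xS yS.
    move=> A; rewrite inE in_setU1 => /andP[/orP[/eqP->//|AE2] /andP[xA yA]].
    move: (AE2); rewrite -/E2 (inP2 _ AE2 xA yA) inE2 => /and3P[_ _].
    by move/negP; case; apply/subsetP => z; rewrite in_set2 => /orP[]/eqP->.
  have pE2 : [set x; y] \in E2.
    rewrite inE2 cards2 nxy pair_clique //=; apply: contra nS => /subsetP sub.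
    by rewrite !sub // !in_set2 !eqxx ?orbT.
  apply: (@card1_of _ _ [set x; y]); first by rewrite inE in_setU1 pE2 orbT !in_set2 !eqxx ?orbT.
  move=> A; rewrite inE in_setU1 => /andP[/orP[/eqP AS0|AE2] /andP[xA yA]].
    by case/negP: nS; rewrite -AS0 xA yA.
  by apply: inP2.
rewrite /cp_weight big_setU1 //=.
have cJ : #|J| = 1 by apply: card_lt; lia.
have cI : #|I| = m by apply: card_lt; lia.
have cW : #|W| = n - m by move: (cardsC I); rewrite cI card_ord /W; lia.
have cS0 : #|S0| <= 1 + (n - m) by rewrite cardsU cJ cW leq_subr.
pose I' := I :\: J.
have cI' : #|I'| = m - 1.
  rewrite cardsD (setIidPr _) ?cI ?cJ //; apply/subsetP => x; rewrite !inE; lia.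
pose D := setX I' W.
have sbE : E2 \subset [set [set p.1; p.2] | p in D].
  apply/subsetP => A; rewrite inE2 => /and3P[/cards2P[x [y [nxy ->]]] cA nsub].
  have adj : KnKm_adj m x y by apply: (clique_adj cA); rewrite ?inE ?eqxx ?orbT.
  have [xS|xS] := boolP (x \in S0); last first.
    apply/imsetP; exists (x, y) => //; rewrite !inE /=; move: xS adj; rewrite inS0 /KnKm_adj.
    case/norP; rewrite -!ltnNge => x1 xm /andP[_]; rewrite xm /= -leqNgt => ym.
    by rewrite x1 ltnS ym.
  have yS : y \notin S0.
    apply: contra nsub => yS; apply/subsetP => z; rewrite in_set2 => /orP[]/eqP-> //.
  apply/imsetP; exists (y, x); last by rewrite setUC.
  rewrite !inE /=; move: yS adj; rewrite inS0 /KnKm_adj.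
  case/norP; rewrite -!ltnNge => y1 ym /andP[_]; rewrite ym andbT -leqNgt => xm.
  by rewrite y1 ltnS xm.
have cE2 : #|E2| <= (m - 1) * (n - m).
  apply: leq_trans (subset_leq_card sbE) _.
  by apply: leq_trans (leq_imset_card _ _) _; rewrite cardsX cI' cW.
have -> : \sum_(i in E2) #|i| = \sum_(i in E2) 2.
  by apply: eq_bigr => A; rewrite inE2 => /and3P[/eqP].
rewrite sum_nat_const; apply: leq_add => //; exact: leq_mul.
Qed.
Unset Implicit Arguments.
Import Order.TTheory GRing.Theory Num.Theory.
Local Open Scope ring_scope.

Theorem mainTheorem8 (R : rcfType) :
  exists (C c : R) (m0 : nat), 0 < C /\ 0 < c /\
  forall n m : nat, (0 < n)%N -> (0 < m)%N ->
    (m%:R : R) <= Num.sqrt (n%:R : R) / 2 ->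
    ((2 * (m%:R : R) - 1) * n%:R - C * m%:R ^+ 2 <= ((scp n m)%:R : R)) /\
    ((m0 <= m)%N -> ((scp n m)%:R : R) <= (2 * (m%:R : R) - 1) * n%:R - c * m%:R ^+ 2).
Proof.
exists 2, 1, 2%N; split; first by []; split; first by [].
move=> n m n0 m0 Hsq.
have h2 : 2 * (m%:R : R) <= Num.sqrt (n%:R) by lra.
have hsq : (2 * (m%:R : R)) * (2 * m%:R) <= n%:R.
  rewrite -[X in _ <= X](@sqr_sqrtr _ (n%:R : R)) ?ler0n // expr2.
  by apply: ler_pM => //; apply: mulr_ge0 => //; apply: ler0n.
have mn : (4 * m * m <= n)%N.
  by rewrite -(ler_nat R) !natrM; move: hsq; nra.
have lt : (m < n)%N by nia.
have Hlo : ((2 * m - 1) * (n - m) <= scp n m)%N.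
  by rewrite /scp; case: ex_minnP => k /existsP[P /andP[cpP /eqP <-]] _; apply: lower.
split.
  have : ((2 * m - 1) * n <= scp n m + 2 * m * m)%N by nia.
  rewrite -(ler_nat R) !natrD !natrM natrB; last by lia.
  rewrite expr2; lra.
move=> m2.
have Hup : (scp n m <= 1 + (n - m) + (m - 1) * (n - m) * 2)%N.
  case: (upper m0 lt) => P /andP[cpP wP]; rewrite /scp; case: ex_minnP => k _ H.
  apply: leq_trans (H _ _) wP; apply/existsP; exists P; by rewrite cpP eqxx.
have : (scp n m + m * m <= (2 * m - 1) * n)%N by nia.
rewrite -(ler_nat R) !natrD !natrM natrB; last by lia.
rewrite expr2; lra.
Qed.
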